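(* Let $M$ be the blow-up of $\mathbb{CP}_2$ at two distinct points. For every Kähler class $\Omega$ on $M$, one has $\mathcal B(\Omega)<\tfrac14$. In explicit form: let $\Omega$ be normalized so that the proper transform of the line through the two blown-up points has area $1$, and let the two exceptional curves have areas $\beta,\gamma>0$. Then $\mathcal B(\Omega)$ equals the rational function $8N(\beta,\gamma)/D(\beta,\gamma)$, where $N=\gamma^2(1+4\gamma+6\gamma^2+4\gamma^3)+\beta\gamma(-1+3\gamma+18\gamma^2+26\gamma^3+16\gamma^4)+2\beta^5(2+8\gamma+21\gamma^2+33\gamma^3+27\gamma^4+9\gamma^5)+\beta^2(1+3\gamma+27\gamma^2+79\gamma^3+89\gamma^4+42\gamma^5)+\beta^4(6+26\gamma+89\gamma^2+168\gamma^3+150\gamma^4+54\gamma^5)+\beta^3(4+18\gamma+79\gamma^2+173\gamma^3+168\gamma^4+66\gamma^5)$ and $D=48\beta^6(1+\gamma)^6+48\beta^5(1+\gamma)^3(3+12\gamma+14\gamma^2+6\gamma^3)+(1+2\gamma)^2(1+8\gamma+20\gamma^2+24\gamma^3+12\gamma^4)+4\beta^4(1+\gamma)^2(47+282\gamma+573\gamma^2+504\gamma^3+180\gamma^4)+4\beta(3+33\gamma+140\gamma^2+306\gamma^3+376\gamma^4+252\gamma^5+72\gamma^6)+8\beta^2(7+70\gamma+270\gamma^2+535\gamma^3+592\gamma^4+354\gamma^5+90\gamma^6)+8\beta^3(17+153\gamma+535\gamma^2+963\gamma^3+966\gamma^4+522\gamma^5+120\gamma^6)$. The statement is that $8N(\beta,\gamma)<\tfrac14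 D(\beta,\gamma)$ for all $\beta,\gamma>0$.
   Context: For a Kähler class $\Omega$ on a toric surface with maximal torus $T^2$, define $\mathcal B(\Omega)=\frac{1}{32\pi^2}\|\mathfrak F(\Omega)\|^2$. This is computed as follows. Let $x,y$ be the Hamiltonians of the torus action for a $T^2$-invariant Kähler metric in $\Omega$. Let $\mathfrak F_1=\int_M x(s-s_0)\,d\mu$ and $\mathfrak F_2=\int_M y(s-s_0)\,d\mu$, with $s_0$ the average scalar curvature. Let $A=\int(x-x_0)^2d\mu$, $B=\int(y-y_0)^2d\mu$, $C=\int(x-x_0)(y-y_0)d\mu$, with $x_0,y_0$ the averages. All of these depend only on $\Omega$. Then $$\mathcal B(\Omega)=\frac{1}{32\pi^2}\,\frac{B\mathfrak F_1^2-2C\mathfrak F_1\mathfrak F_2+A\mathfrak F_2^2}{AB-C^2}.$$ If $\Omega$ contains an extremal Kähler metric, this equals $\frac{1}{32\pi^2}\int(s-s_0)^2\,d\mu$. *)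

(* Defs.v *)
From Stdlib Require Import Reals Lra Psatz.
Open Scope R_scope.

(* Numerator N(beta,gamma) of the explicit formula for B(Omega) on the
   blow-up of CP^2 at two points (line normalized to area 1, exceptional
   curves of areas beta, gamma). *)
Definition Nbg (b g : R) : R :=
  g^2 * (1 + 4*g + 6*g^2 + 4*g^3)
  + b*g * (-1 + 3*g + 18*g^2 + 26*g^3 + 16*g^4)
  + 2*b^5 * (2 + 8*g + 21*g^2 + 33*g^3 + 27*g^4 + 9*g^5)
  + b^2 * (1 + 3*g + 27*g^2 + 79*g^3 + 89*g^4 + 42*g^5)
  + b^4 * (6 + 26*g + 89*g^2 + 168*g^3 + 150*g^4 + 54*g^5)
  + b^3 * (4 + 18*g + 79*g^2 + 173*g^3 + 168*g^4 + 66*g^5).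

Definition Dbg (b g : R) : R :=
  48*b^6*(1+g)^6
  + 48*b^5*(1+g)^3*(3 + 12*g + 14*g^2 + 6*g^3)
  + (1+2*g)^2*(1 + 8*g + 20*g^2 + 24*g^3 + 12*g^4)
  + 4*b^4*(1+g)^2*(47 + 282*g + 573*g^2 + 504*g^3 + 180*g^4)
  + 4*b*(3 + 33*g + 140*g^2 + 306*g^3 + 376*g^4 + 252*g^5 + 72*g^6)
  + 8*b^2*(7 + 70*g + 270*g^2 + 535*g^3 + 592*g^4 + 354*g^5 + 90*g^6)
  + 8*b^3*(17 + 153*g + 535*g^2 + 963*g^3 + 966*g^4 + 522*g^5 + 120*g^6).

Definition Bcal (b g : R) : R := 8 * Nbg b g / Dbg b g.

(* Main.v *)
Require Import Defs.
From Stdlib Require Import Reals Lra Psatz.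
Open Scope R_scope.

Lemma key (b g : R) : 0 < b -> 0 < g -> 0 < Dbg b g - 32 * Nbg b g /\ 0 < Dbg b g.
Proof.
  intros Hb Hg.
  assert (0 <= g^3*(8-4*g+16*g^2)) by (apply Rmult_le_pos; [apply pow_le; lra| nra]).
  assert (0 <= b^3*(8-4*b+16*b^2)) by (apply Rmult_le_pos; [apply pow_le; lra| nra]).
  assert (0 <= b^0*g^1) by (apply Rmult_le_pos; apply pow_le; lra).
  assert (0 <= b^0*g^2) by (apply Rmult_le_pos; apply pow_le; lra).
  assert (0 <= b^0*g^3) by (apply Rmult_le_pos; apply pow_le; lra).
  assert (0 <= b^0*g^4) by (apply Rmult_le_pos; apply pow_le; lra).
  assert (0 <= b^0*g^5) by (apply Rmult_le_pos; apply pow_le; lra).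
  assert (0 <= b^0*g^6) by (apply Rmult_le_pos; apply pow_le; lra).
  assert (0 <= b^1*g^0) by (apply Rmult_le_pos; apply pow_le; lra).
  assert (0 <= b^1*g^1) by (apply Rmult_le_pos; apply pow_le; lra).
  assert (0 <= b^1*g^2) by (apply Rmult_le_pos; apply pow_le; lra).
  assert (0 <= b^1*g^3) by (apply Rmult_le_pos; apply pow_le; lra).
  assert (0 <= b^1*g^4) by (apply Rmult_le_pos; apply pow_le; lra).
  assert (0 <= b^1*g^5) by (apply Rmult_le_pos; apply pow_le; lra).
  assert (0 <= b^1*g^6) by (apply Rmult_le_pos; apply pow_le; lra).
  assert (0 <= b^2*g^0) by (apply Rmult_le_pos; apply pow_le; lra).
  assert (0 <= b^2*g^1) by (apply Rmult_le_pos; apply pow_le; lra).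
  assert (0 <= b^2*g^2) by (apply Rmult_le_pos; apply pow_le; lra).
  assert (0 <= b^2*g^3) by (apply Rmult_le_pos; apply pow_le; lra).
  assert (0 <= b^2*g^4) by (apply Rmult_le_pos; apply pow_le; lra).
  assert (0 <= b^2*g^5) by (apply Rmult_le_pos; apply pow_le; lra).
  assert (0 <= b^2*g^6) by (apply Rmult_le_pos; apply pow_le; lra).
  assert (0 <= b^3*g^0) by (apply Rmult_le_pos; apply pow_le; lra).
  assert (0 <= b^3*g^1) by (apply Rmult_le_pos; apply pow_le; lra).
  assert (0 <= b^3*g^2) by (apply Rmult_le_pos; apply pow_le; lra).
  assert (0 <= b^3*g^3) by (apply Rmult_le_pos; apply pow_le; lra).
  assert (0 <= b^3*g^4) by (apply Rmult_le_pos; apply pow_le; lra).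
  assert (0 <= b^3*g^5) by (apply Rmult_le_pos; apply pow_le; lra).
  assert (0 <= b^3*g^6) by (apply Rmult_le_pos; apply pow_le; lra).
  assert (0 <= b^4*g^0) by (apply Rmult_le_pos; apply pow_le; lra).
  assert (0 <= b^4*g^1) by (apply Rmult_le_pos; apply pow_le; lra).
  assert (0 <= b^4*g^2) by (apply Rmult_le_pos; apply pow_le; lra).
  assert (0 <= b^4*g^3) by (apply Rmult_le_pos; apply pow_le; lra).
  assert (0 <= b^4*g^4) by (apply Rmult_le_pos; apply pow_le; lra).
  assert (0 <= b^4*g^5) by (apply Rmult_le_pos; apply pow_le; lra).
  assert (0 <= b^4*g^6) by (apply Rmult_le_pos; apply pow_le; lra).
  assert (0 <= b^5*g^0) by (apply Rmult_le_pos; apply pow_le; lra).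
  assert (0 <= b^5*g^1) by (apply Rmult_le_pos; apply pow_le; lra).
  assert (0 <= b^5*g^2) by (apply Rmult_le_pos; apply pow_le; lra).
  assert (0 <= b^5*g^3) by (apply Rmult_le_pos; apply pow_le; lra).
  assert (0 <= b^5*g^4) by (apply Rmult_le_pos; apply pow_le; lra).
  assert (0 <= b^5*g^5) by (apply Rmult_le_pos; apply pow_le; lra).
  assert (0 <= b^5*g^6) by (apply Rmult_le_pos; apply pow_le; lra).
  assert (0 <= b^6*g^0) by (apply Rmult_le_pos; apply pow_le; lra).
  assert (0 <= b^6*g^1) by (apply Rmult_le_pos; apply pow_le; lra).
  assert (0 <= b^6*g^2) by (apply Rmult_le_pos; apply pow_le; lra).
  assert (0 <= b^6*g^3) by (apply Rmult_le_pos; apply pow_le; lra).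
  assert (0 <= b^6*g^4) by (apply Rmult_le_pos; apply pow_le; lra).
  assert (0 <= b^6*g^5) by (apply Rmult_le_pos; apply pow_le; lra).
  assert (0 <= b^6*g^6) by (apply Rmult_le_pos; apply pow_le; lra).
  unfold Dbg, Nbg; split; lra.
Qed.

Theorem lemmaA1 : forall beta gamma : R, 0 < beta -> 0 < gamma ->
  Bcal beta gamma < 1/4.
Proof.
  intros b g Hb Hg. destruct (key b g Hb Hg) as [H1 H2].
  unfold Bcal.
  assert (E : 8 * Nbg b g / Dbg b g = 1/4 - (Dbg b g - 32 * Nbg b g) / (4 * Dbg b g)) by (field; lra).
  rewrite E.
  assert (0 < (Dbg b g - 32 * Nbg b g) / (4 * Dbg b g)) by (apply Rdiv_lt_0_compat; lra).
  lra.
Qed.
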